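(* Let $G$ be a finite abelian group such that $G$ is not isomorphic to $C_2^2$ (the Klein four-group). Then $\operatorname{Aut}(\mathcal{P}_{0}(G))\simeq \operatorname{Aut}(G)$.
   Context: For an additively written finite abelian group $G$, the reduced power monoid $\mathcal{P}_{0}(G)$ is the set of all subsets of $G$ containing $0$, with the operation of setwise addition $X+Y=\{x+y : x\in X, y\in Y\}$ and identity $\{0\}$. $\operatorname{Aut}$ denotes the group of monoid (resp. group) automorphisms. $C_n$ denotes the cyclic group of order $n$. (In the paper, the isomorphism arises from the canonical embedding $\operatorname{Aut}(G)\to\operatorname{Aut}(\mathcal{P}_0(G))$, $h\mapsto F_h$, where $F_h(X)=\{h(x):x\in X\}$.) *)

(* Defs.v *)
From mathcomp Require Import all_boot all_algebra.
Set Implicit Arguments. Unset Strict Implicit. Unset Printing Implicit Defensive.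
Import GRing.Theory.
Local Open Scope ring_scope.

Definition setadd (G : finZmodType) (X Y : {set G}) : {set G} :=
  [set x + y | x in X, y in Y].

Definition P0 (G : finZmodType) := {X : {set G} | (0 : G) \in X}.

Lemma setadd_P0 (G : finZmodType) (X Y : P0 G) :
  (0 : G) \in setadd (val X) (val Y).
Proof.
apply/imset2P; exists 0 0; [exact: (valP X) | exact: (valP Y) | by rewrite addr0].
Qed.

Definition P0add (G : finZmodType) (X Y : P0 G) : P0 G :=
  exist _ (setadd (val X) (val Y)) (setadd_P0 X Y).

Definition P0one (G : finZmodType) : P0 G :=
  exist _ [set (0 : G)] (set11 (0 : G)).

Definition P0_monoid_aut (G : finZmodType) (phi : P0 G -> P0 G) : Prop :=
  [/\ bijective phi,
      forall X Y : P0 G, phi (P0add X Y) = P0add (phi X) (phi Y)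
    & phi (P0one G) = P0one G].

Definition group_aut (G : finZmodType) (h : G -> G) : Prop :=
  bijective h /\ {morph h : x y / x + y}.

Definition group_isomorphic (G H : finZmodType) : Prop :=
  exists f : G -> H, bijective f /\ {morph f : x y / x + y}.

Definition Klein4 : finZmodType := 'rV['Z_2]_2.

(* Main.v *)
Require Import Defs.
From mathcomp Require Import all_boot all_algebra.
From Stdlib Require Import FunctionalExtensionality.
Set Implicit Arguments. Unset Strict Implicit. Unset Printing Implicit Defensive.
Import GRing.Theory.
Local Open Scope ring_scope.


Section Basic.
Variable G : finZmodType.
Implicit Types (A B S X Y : {set G}) (x y t : G).

Lemma setaddP A B z :
  reflect (exists x, exists y, [/\ x \in A, y \in B & z = x + y]) (z \in setadd A B).
Proof.
apply: (iffP imset2P) => [[x y xA yB ->]|[x [y [xA yB ->]]]]; first by exists x, y.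
by exists x y.
Qed.

Lemma setadd_f A B x y : x \in A -> y \in B -> x + y \in setadd A B.
Proof. by move=> xA yB; apply/setaddP; exists x, y. Qed.

Definition mkP S : P0 G := exist _ (0 |: S) (setU11 _ _).

Lemma val_mkP S : val (mkP S) = 0 |: S. Proof. by []. Qed.

Lemma setU1_in x S : x \in S -> x |: S = S.
Proof. by move=> xS; apply/setP => z; rewrite !inE; case: eqP => // ->. Qed.

Lemma val_mkP0 S : 0 \in S -> val (mkP S) = S.
Proof. exact: setU1_in. Qed.

Definition aperS S := forall t, t != 0 -> exists2 x, x \in S & x + t \notin S.

Definition aper (X : P0 G) := forall Y : P0 G, P0add X Y = X -> Y = P0one G.

Lemma aperE (X : P0 G) : aper X <-> aperS (val X).
Proof.
split.
- move=> hX t t0.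
  case: (pickP [pred x | (x \in val X) && (x + t \notin val X)]) => [x /andP[h1 h2]|none].
    by exists x.
  have e : P0add X (mkP [set t]) = X.
    apply: val_inj => /=; apply/setP => z; apply/setaddP/idP.
      move=> [x [y [xX]]]; rewrite !inE => /orP[] /eqP -> ->; first by rewrite addr0.
      by move: (none x) => /=; rewrite xX /= => /negbFE.
    by move=> zX; exists z, 0; rewrite addr0 !inE eqxx.
  move: (hX _ e) => /(congr1 val) /= /setP /(_ t).
  by rewrite !inE eqxx orbT (negbTE t0).
- move=> hX Y e; apply: val_inj => /=; apply/setP => y; rewrite inE.
  apply/idP/eqP => [yY|->]; last exact: (valP Y).
  apply/eqP; apply/negP => /negP y0.
  have [x xX nx] := hX y y0; move: nx; rewrite -e /=.
  by rewrite (setadd_f xX yY).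
Qed.

Lemma aper2 x : x + x != 0 -> aperS [set 0; x].
Proof.
move=> xx t t0; case: (eqVneq t x) => [->|tx].
  exists x; first by rewrite !inE eqxx orbT.
  rewrite !inE negb_or xx /=; apply/eqP => e.
  have x0 : x = 0 by apply: (addrI x); rewrite addr0.
  by move: xx; rewrite x0 addr0 eqxx.
by exists 0; rewrite ?inE ?eqxx // add0r negb_or t0.
Qed.

Lemma aper3 x c : x + c != 0 -> x + c != x -> x + c != c -> aperS [set 0; x; c].
Proof.
move=> h1 h2 h3 t t0.
case: (eqVneq t x) => [->|tx].
  by exists c; rewrite ?inE ?eqxx ?orbT // addrC !negb_or h1 h2 h3.
case: (eqVneq t c) => [->|tc].
  by exists x; rewrite ?inE ?eqxx ?orbT // !negb_or h1 h2 h3.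
by exists 0; rewrite ?inE ?eqxx // add0r !negb_or t0 tx tc.
Qed.

End Basic.


Section Sets.
Variable G : finZmodType.
Implicit Types (A B S T X Y : {set G}) (x y t : G).

Lemma setaddT S : 0 \in S -> setadd S setT = setT.
Proof.
move=> S0; apply/setP => z; rewrite inE; apply/setaddP; exists 0, z.
by rewrite add0r inE.
Qed.

Lemma addZ S y : 0 \in S -> aperS S -> y \notin S ->
  setadd S (0 |: [set z | y - z \notin S]) = [set~ y].
Proof.
move=> S0 aS yS; apply/setP => w; rewrite !inE; apply/setaddP/idP.
  move=> [x [z [xS]]]; rewrite !inE => /orP[/eqP ->|hz] ->.
    by rewrite addr0; apply/eqP => e; move: yS; rewrite -e xS.
  apply/eqP => e; move: hz; rewrite -e addrK xS //.
move=> wy; have t0 : y - w != 0 by rewrite subr_eq0 eq_sym.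
have [x xS nx] := aS _ t0.
exists x, (w - x); split => //; last by rewrite addrC subrK.
rewrite !inE; apply/orP; right.
by rewrite opprB addrCA.
Qed.

Lemma Zaper S y : 0 \in S -> aperS S -> y \notin S ->
  aperS (0 |: [set z | y - z \notin S]).
Proof.
move=> S0 aS yS t t0.
have [x xS nx] := aS _ t0.
exists (y - x - t).
  rewrite !inE; apply/orP; right.
  by rewrite !opprB addrCA subrKC addrC.
rewrite !inE negb_or negbK subrK; apply/andP; split.
  by rewrite subr_eq0; apply: contraNneq yS => ->.
by rewrite opprB subrKC.
Qed.

Lemma setadd_idem T Y : setadd T T = T -> 0 \in T -> 0 \in Y ->
  (setadd Y T == T) = (Y \subset T).
Proof.
move=> TT T0 Y0; apply/eqP/subsetP.
  by move=> e y yY; rewrite -e -[y]addr0 setadd_f.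
move=> sYT; apply/setP => z; apply/setaddP/idP.
  by move=> [y [u [yY uT ->]]]; rewrite -TT setadd_f // sYT.
by move=> zT; exists 0, z; rewrite add0r.
Qed.

Lemma imset_add (f : G -> G) (fD : {morph f : x y / x + y}) A B :
  f @: setadd A B = setadd (f @: A) (f @: B).
Proof.
apply/setP => z; apply/imsetP/setaddP.
  move=> [w /setaddP[x [y [xA yB ->]]] ->].
  by exists (f x), (f y); rewrite fD !imset_f.
move=> [u [v [/imsetP[x xA ->] /imsetP[y yB ->] ->]]].
by exists (x + y); rewrite ?fD // setadd_f.
Qed.

Definition stab S := [set t | [forall x in S, x + t \in S]].

Lemma stab_decomp X : 0 \in X ->
  [/\ 0 \in stab X, setadd (stab X) (stab X) = stab X,
      setadd (0 |: (X :\: stab X)) (stab X) = X & aperS (0 |: (X :\: stab X))].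
Proof.
move=> X0.
have K0 : 0 \in stab X by rewrite inE; apply/forall_inP => x xX; rewrite addr0.
have KX : stab X \subset X.
  by apply/subsetP => t; rewrite inE => /forall_inP /(_ 0 X0); rewrite add0r.
have Kadd x t : x \in X -> t \in stab X -> x + t \in X.
  by move=> xX; rewrite inE => /forall_inP; apply.
split => //.
- apply/setP => z; apply/setaddP/idP.
    move=> [u [v [uK vK ->]]]; rewrite inE; apply/forall_inP => x xX.
    by rewrite addrA !Kadd.
  by move=> zK; exists 0, z; rewrite add0r.
- apply/setP => z; apply/setaddP/idP.
    move=> [u [v [uA vK ->]]]; apply: Kadd vK.
    by move: uA; rewrite !inE => /orP[/eqP ->|/andP[]].
  move=> zX; case: (boolP (z \in stab X)) => zK.
    by exists 0, z; split; rewrite ?add0r ?setU11.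
  by exists z, 0; split; rewrite ?addr0 // in_setU1 in_setD zK zX orbT.
- move=> t t0.
  case: (pickP [pred x | (x \in 0 |: (X :\: stab X)) && (x + t \notin 0 |: (X :\: stab X))]) => [x /andP[h1 h2]|none].
    by exists x.
  have hA x : x \in 0 |: (X :\: stab X) -> x + t \in 0 |: (X :\: stab X).
    by move=> xA; move: (none x) => /=; rewrite xA /= => /negbFE.
  have tA : t \in 0 |: (X :\: stab X) by rewrite -[t]add0r hA // !inE eqxx.
  have AX x : x \in 0 |: (X :\: stab X) -> x \in X.
    by rewrite !inE => /orP[/eqP ->|/andP[]].
  have tK : t \in stab X.
    rewrite inE; apply/forall_inP => x xX.
    case: (boolP (x \in stab X)) => xK.
      by rewrite addrC Kadd // AX.
    by apply: AX; apply: hA; rewrite in_setU1 in_setD xK xX orbT.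
  by move: tA; rewrite in_setU1 in_setD tK (negbTE t0).
Qed.


Lemma add22 x y : setadd [set 0; x] [set 0; y] = [set 0; x; y; x + y].
Proof.
apply/setP => z; apply/setaddP/idP.
  move=> [u [v [hu hv ->]]]; move: hu hv; rewrite !inE.
  by move=> /orP[]/eqP-> /orP[]/eqP->; rewrite ?addr0 ?add0r ?eqxx ?orbT.
rewrite !inE => /orP[/orP[/orP[]|]|] /eqP->.
- by exists 0, 0; rewrite addr0 !inE eqxx.
- by exists x, 0; rewrite addr0 !inE !eqxx ?orbT.
- by exists 0, y; rewrite add0r !inE !eqxx ?orbT.
- by exists x, y; rewrite !inE !eqxx ?orbT.
Qed.

Lemma add32 x y z : setadd [set 0; x; y] [set 0; z] = [set 0; x; y; z; x + z; y + z].
Proof.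
apply/setP => w; apply/setaddP/idP.
  move=> [u [v [hu hv ->]]]; move: hu hv; rewrite !inE.
  by move=> /orP[/orP[]|] /eqP-> /orP[]/eqP->; rewrite ?addr0 ?add0r ?eqxx ?orbT.
rewrite !inE => /orP[/orP[/orP[/orP[/orP[]|]|]|]|] /eqP->.
- by exists 0, 0; rewrite addr0 !inE eqxx.
- by exists x, 0; rewrite addr0 !inE !eqxx ?orbT.
- by exists y, 0; rewrite addr0 !inE !eqxx ?orbT.
- by exists 0, z; rewrite add0r !inE !eqxx ?orbT.
- by exists x, z; rewrite !inE !eqxx ?orbT.
- by exists y, z; rewrite !inE !eqxx ?orbT.
Qed.

End Sets.


Lemma mulrn_mod2 (G : zmodType) (x : G) n : x + x = 0 -> x *+ n = x *+ (n %% 2).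
Proof.
move=> xx; rewrite -mulr2n in xx.
by rewrite {1}(divn_eq n 2) mulnC mulrnDr mulrnA xx mul0rn add0r.
Qed.

Lemma Z2add (a b : 'Z_2) : nat_of_ord (a + b) = ((a + b) %% 2)%N.
Proof. by []. Qed.

Lemma card_Klein : #|Klein4| = 4%N.
Proof. by rewrite /Klein4 card_mx card_ord. Qed.

Lemma Klein_iso (G : finZmodType) (u v : G) :
  (forall x : G, x + x = 0) -> u != 0 -> v != 0 -> v != u ->
  (forall x : G, x \in [:: 0; u; v; u + v]) -> group_isomorphic G Klein4.
Proof.
move=> e2 u0 v0 vu all.
pose gk (m : Klein4) : G := u *+ (m ord0 ord0 : nat) + v *+ (m ord0 (1 : 'I_2) : nat).
have gkD : {morph gk : m m' / m + m'}.
  move=> m m'; rewrite /gk !mxE !Z2add.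
  rewrite -(mulrn_mod2 _ (e2 u)) -(mulrn_mod2 _ (e2 v)) !mulrnDr.
  by rewrite addrACA.
have uv0 : u + v != 0.
  apply: contra_neq vu => e; apply: (addrI u); rewrite e; exact/esym/e2.
have gk0 m : gk m = 0 -> m = 0.
  rewrite /gk => e.
  have [h0 h1] : m ord0 ord0 = 0 /\ m ord0 (1 : 'I_2) = 0.
    move: e; case: (m ord0 ord0) => [[|[|n]] p0]; case: (m ord0 (1 : 'I_2)) => [[|[|n']] p1] //=;
      rewrite ?mulr0n ?mulr1n ?addr0 ?add0r => e.
    - by split; apply: val_inj.
    - by move: v0; rewrite e eqxx.
    - by move: u0; rewrite e eqxx.
    - by move: uv0; rewrite e eqxx.
  apply/rowP => j; rewrite mxE; case: j => [[|[|n]] pj] //.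
    by rewrite -h0; congr (m _ _); apply: val_inj.
  by rewrite -h1; congr (m _ _); apply: val_inj.
have gk_inj : injective gk.
  move=> m m' e.
  have := gkD (m - m') m'; rewrite subrK e => e'.
  have h : gk (m - m') = 0 by apply: (addIr (gk m')); rewrite add0r -e'.
  by apply/eqP; rewrite -subr_eq0; apply/eqP; apply: gk0.
have gk_bij : bijective gk.
  apply: (inj_card_bij gk_inj); rewrite card_Klein.
  apply: leq_trans (card_size [:: 0; u; v; u + v]).
  by apply: subset_leq_card; apply/subsetP => x _; apply: all.
have [f gkf fgk] := gk_bij.
exists f; split; first by exists gk.
move=> x y; apply: gk_inj; by rewrite gkD !fgk.
Qed.


Section Aut.
Variable G : finZmodType.
Variables (phi g : P0 G -> P0 G).
Hypotheses (phiK : cancel phi g) (gK : cancel g phi)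
  (phiD : forall X Y, phi (P0add X Y) = P0add (phi X) (phi Y))
  (phi1 : phi (P0one G) = P0one G).

Lemma gD X Y : g (P0add X Y) = P0add (g X) (g Y).
Proof. by apply: (can_inj phiK); rewrite phiD !gK. Qed.

Lemma g1 : g (P0one G) = P0one G.
Proof. by rewrite -phi1 phiK. Qed.

Lemma phi_inj : injective phi. Proof. exact: can_inj phiK. Qed.

Definition PG : P0 G := mkP setT.

Lemma setTadd (S : {set G}) : 0 \in S -> setadd setT S = setT.
Proof.
move=> S0; apply/setP => z; rewrite inE; apply/setaddP; exists z, 0.
by rewrite addr0 inE.
Qed.

Lemma PGadd Y : P0add PG Y = PG.
Proof. by apply: val_inj => /=; rewrite setU1_in ?inE // setTadd // (valP Y). Qed.

Lemma phiG : phi PG = PG.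
Proof.
rewrite -{1}(PGadd (g PG)) phiD gK; apply: val_inj => /=.
by rewrite setU1_in ?inE // setaddT // (valP (phi PG)).
Qed.

Definition Cs (y : G) : P0 G := mkP [set~ y].

Lemma val_Cs y : y != 0 -> val (Cs y) = [set~ y].
Proof. by move=> y0; rewrite val_mkP0 // !inE eq_sym. Qed.

Lemma setU0C (y : G) : y != 0 -> 0 |: [set~ y] = [set~ y].
Proof. exact: val_Cs. Qed.

Definition univ (X : P0 G) := forall Y, Y != P0one G -> P0add X Y = PG.

Lemma P0one_neq (Y : P0 G) : Y != P0one G -> exists2 a, a \in val Y & a != 0.
Proof.
move=> Y1; case: (pickP [pred a | (a \in val Y) && (a != 0)]) => [a /andP[]|none].
  by exists a.
case/eqP: Y1; apply: val_inj => /=; apply/setP => z; rewrite inE.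
apply/idP/eqP => [zY|->]; last exact: (valP Y).
by move: (none z) => /=; rewrite zY /= => /negbFE /eqP.
Qed.

Lemma univ_Cs y : y != 0 -> univ (Cs y).
Proof.
move=> y0 Y /P0one_neq [a aY a0]; apply: val_inj => /=.
rewrite setU0C // setU1_in ?inE //; apply/setP => z; rewrite inE; apply/setaddP.
case: (eqVneq z y) => [->|zy].
  exists (y - a), a; split => //; last by rewrite subrK.
  by rewrite !inE -subr_eq0 addrC addKr oppr_eq0.
by exists z, 0; split; rewrite ?addr0 ?inE ?zy // (valP Y).
Qed.

Lemma univ_phi X : univ X -> univ (phi X).
Proof.
move=> uX Y Y1; have gY1 : g Y != P0one G.
  by apply: contra_neq Y1 => e; rewrite -(gK Y) e phi1.
by rewrite -(gK Y) -phiD uX // phiG.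
Qed.

Lemma univ_inv X : univ X -> X != PG -> exists2 y, y != 0 & val X = [set~ y].
Proof.
move=> uX XG.
case: (pickP [pred y | y \notin val X]) => [y /= yX|none]; last first.
  case/eqP: XG; apply: val_inj => /=; rewrite setU1_in ?inE //.
  by apply/setP => z; rewrite inE; move: (none z) => /= /negbFE.
have y0 : y != 0 by apply: contraNneq yX => ->; exact: (valP X).
exists y => //; apply/setP => z; rewrite !inE.
apply/idP/idP => [zX|zy]; first by apply: contraNneq yX => <-.
have d0 : y - z != 0 by rewrite subr_eq0 eq_sym.
have Y1 : mkP [set y - z] != P0one G.
  apply/eqP => /(congr1 val) /= /setP /(_ (y - z)).
  by rewrite !inE eqxx orbT (negbTE d0).
have := uX _ Y1 => /(congr1 val) /= /setP /(_ y).
rewrite [0 |: setT]setU1_in ?inE // => /setaddP [x [e [xX]]].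
rewrite !inE => /orP[/eqP ->|/eqP ->].
  by rewrite addr0 => e'; move: yX; rewrite e' xX.
move=> e'; suff -> : z = x by [].
by apply: (addIr (y - z)); rewrite subrKC.
Qed.

Definition sgm (y : G) : G := odflt 0 [pick s | s \notin val (phi (Cs y))].

Lemma sigP y : y != 0 -> sgm y != 0 /\ val (phi (Cs y)) = [set~ sgm y].
Proof.
move=> y0.
have CG : phi (Cs y) != PG.
  rewrite -phiG; apply/eqP => /phi_inj /(congr1 val) /=.
  rewrite setU0C // => /setP /(_ y); by rewrite !inE eqxx orbT.
have [s s0 es] := univ_inv (univ_phi (univ_Cs y0)) CG.
rewrite /sgm; case: pickP => [s' /=|/(_ s) /=]; last by rewrite es !inE eqxx.
by rewrite es !inE negbK => /eqP ->.
Qed.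

Lemma sig0 : sgm 0 = 0.
Proof.
rewrite /sgm.
have -> : Cs 0 = PG by apply: val_inj => /=; apply/setP => z; rewrite !inE; case: eqP.
rewrite phiG; case: pickP => [s /=|//].
by rewrite setU1_in ?inE.
Qed.

Lemma phiCs y : y != 0 -> phi (Cs y) = Cs (sgm y).
Proof.
move=> y0; have [s0 e] := sigP y0.
by apply: val_inj; rewrite e val_Cs.
Qed.

Lemma sgm_neq0 y : (sgm y == 0) = (y == 0).
Proof.
case: (eqVneq y 0) => [->|y0]; first by rewrite sig0 eqxx.
by have [/negbTE -> _] := sigP y0.
Qed.

Lemma sgm_inj : injective sgm.
Proof.
move=> y y' e.
case: (eqVneq y 0) => [y0|y0].
  by rewrite y0 in e *; apply/eqP; rewrite eq_sym -sgm_neq0 -e sig0.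
case: (eqVneq y' 0) => [y'0|y'0].
  by move: y0; rewrite -sgm_neq0 e y'0 sig0 eqxx.
have : Cs y = Cs y' by apply: phi_inj; rewrite !phiCs // e.
move=> /(congr1 val); rewrite !val_Cs // => /setP /(_ y).
by rewrite !inE eqxx => /esym /negbFE /eqP.
Qed.

Lemma sgm_bij : bijective sgm.
Proof. exact: injF_bij sgm_inj. Qed.

Lemma dvd_Cs (X : P0 G) y : aperS (val X) -> y != 0 ->
  (y \notin val X) <-> exists Z, P0add X Z = Cs y.
Proof.
move=> aX y0; split.
  move=> yX; exists (mkP [set z | y - z \notin val X]).
  by apply: val_inj => /=; rewrite addZ // ?(valP X) // setU0C.
move=> [Z /(congr1 val) /=]; rewrite setU0C // => e.
have : y \notin [set~ y] by rewrite !inE eqxx.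
rewrite -e; apply: contra => yX.
by rewrite -[y]addr0 setadd_f // (valP Z).
Qed.

Lemma phi_aper (X : P0 G) : aperS (val X) -> val (phi X) = sgm @: val X.
Proof.
move=> aX.
have aX' : aperS (val (phi X)).
  by apply/aperE; move/aperE: aX => aX Y hY; rewrite -(gK Y);
     rewrite (aX (g Y)) ?g1 ?phi1 //; apply: phi_inj; rewrite phiD gK.
have key x : (x \in val X) = (sgm x \in val (phi X)).
  case: (eqVneq x 0) => [->|x0]; first by rewrite sig0 (valP X) (valP (phi X)).
  have sx0 : sgm x != 0 by rewrite sgm_neq0.
  apply/idP/idP; apply: contraLR => hx.
    move/(dvd_Cs aX' sx0): hx => [Z e]; apply/(dvd_Cs aX x0).
    by exists (g Z); apply: phi_inj; rewrite phiD gK e phiCs.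
  move/(dvd_Cs aX x0): hx => [Z e]; apply/(dvd_Cs aX' sx0).
  by exists (phi Z); rewrite -phiD e phiCs.
apply/setP => w; have [sinv sK Ks] := sgm_bij.
by rewrite -(Ks w) mem_imset ?key //; exact: sgm_inj.
Qed.


Lemma zi1 (x u v : G) : x - (u - v) - v = x - u.
Proof. by rewrite -addrA -opprD subrK. Qed.
Lemma zi3 (a b : G) : a - b + (a - b) = (a + a) - (b + b).
Proof. by rewrite addrACA opprD. Qed.
Lemma zi4 (a : G) : a - (a + a) = - a.
Proof. by rewrite opprD addrA subrr add0r. Qed.
Lemma zi5 (a y : G) : a + a = 0 -> y - a - a = y.
Proof. by move=> aa; rewrite -addrA -opprD aa subr0. Qed.
Lemma zi6 (a : G) : a + a = 0 -> - a = a.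
Proof. by move=> aa; apply/eqP; rewrite eq_sym -addr_eq0 aa. Qed.

Lemma transl (A : P0 G) a y : aperS (val A) -> a \in val A -> y \notin val A ->
  exists w, sgm w = sgm y - sgm a /\ y - w \in val A.
Proof.
move=> aA aIn yA.
have y0 : y != 0 by apply: contraNneq yA => ->; exact: (valP A).
pose Z := mkP [set z | y - z \notin val A].
have eAZ : P0add A Z = Cs y.
  by apply: val_inj => /=; rewrite addZ ?(valP A) // setU0C.
have aZ : aperS (val Z) by apply: Zaper => //; exact: (valP A).
have := congr1 val (congr1 phi eAZ).
rewrite phiD phiCs // [val (P0add _ _)]/= (phi_aper aA) (phi_aper aZ) val_Cs ?sgm_neq0 // => e.
have [sinv sK Ks] := sgm_bij.
exists (sinv (sgm y - sgm a)); rewrite Ks; split => //.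
apply/negPn/negP => h.
have : sgm y \in [set~ sgm y].
  rewrite -e; apply/setaddP; exists (sgm a), (sgm y - sgm a); split.
  - exact: imset_f.
  - by rewrite -{1}(Ks (sgm y - sgm a)) imset_f // !inE h orbT.
  - by rewrite subrKC.
by rewrite !inE eqxx.
Qed.

Lemma F2 a y : a + a != 0 -> y != 0 -> y != a -> sgm (y - a) = sgm y - sgm a.
Proof.
move=> aa y0 ya.
have a0 : a != 0 by apply: contra_neq aa => ->; rewrite addr0.
have yA : y \notin 0 |: [set a] by rewrite !inE negb_or y0 ya.
have aA : a \in 0 |: [set a] by rewrite !inE eqxx orbT.
have [w [e h]] := @transl (mkP [set a]) a y (aper2 aa) aA yA.
move: h; rewrite !inE => /orP[|] /eqP h.
  move: e; have -> : w = y by apply/eqP; rewrite eq_sym -subr_eq0 h.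
  move/eqP; rewrite -subr_eq0 opprB subrKC sgm_neq0 => /eqP a0'.
  by move: a0; rewrite a0' eqxx.
by rewrite -e -h opprB subrKC.
Qed.

Lemma F3 a c y : a + c != 0 -> a + c != a -> a + c != c ->
  y != 0 -> y != a -> y != c ->
  sgm (y - a) = sgm y - sgm a \/ sgm (y - c) = sgm y - sgm a.
Proof.
move=> h1 h2 h3 y0 ya yc.
have a0 : a != 0 by apply: contra_neq h3 => ->; rewrite add0r.
have yA : y \notin val (mkP [set a; c]) by rewrite /= !inE !negb_or y0 ya yc.
have aA : a \in val (mkP [set a; c]) by rewrite /= !inE eqxx orbT.
have ap : aperS (val (mkP [set a; c])) by rewrite val_mkP setUA; exact: aper3.
have [w [e h]] := @transl (mkP [set a; c]) a y ap aA yA.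
move: h; rewrite !inE => /orP[/eqP h|/orP[]/eqP h].
- move: e; have -> : w = y by apply/eqP; rewrite eq_sym -subr_eq0 h.
  move/eqP; rewrite -subr_eq0 opprB subrKC sgm_neq0 => /eqP a0'.
  by move: a0; rewrite a0' eqxx.
- by left; rewrite -e -h opprB subrKC.
- by right; rewrite -e -h opprB subrKC.
Qed.

Hypothesis nK : ~ group_isomorphic G Klein4.

Lemma Mlem a y : a != 0 -> y != 0 -> y != a -> sgm (y - a) = sgm y - sgm a.
Proof.
move=> a0 y0 ya.
case: (eqVneq (a + a) 0) => aa; last exact: F2.
case: (pickP [pred b : G | b + b != 0]) => [b /= bb|none].
  pose b' := if b == a - y then - b else b.
  have bb' : b' + b' != 0 by rewrite /b'; case: ifP => //; rewrite -opprD oppr_eq0.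
  have by' : b' != a - y.
    rewrite /b'; case: (eqVneq b (a - y)) => [e|ne] //.
    rewrite -e; apply/eqP => e'.
    by move: bb; rewrite -{1}e' addNr eqxx.
  have ab : a != b' by apply: contra_neq bb' => <-; rewrite aa.
  have F1 := F2 bb' a0 ab.
  have cc : (a - b') + (a - b') != 0.
    by rewrite zi3 aa sub0r oppr_eq0.
  have yc : y != a - b'.
    by apply: contra_neq by' => ->; rewrite opprB subrKC.
  have F1' := F2 cc y0 yc.
  have yc0 : y - (a - b') != 0 by rewrite subr_eq0.
  have ycb : y - (a - b') != b'.
    by apply: contra_neq ya => e; rewrite -[y](subrK (a - b')) e addrC subrK.
  have F1'' := F2 bb' yc0 ycb.
  by rewrite -(zi1 y a b') F1'' F1' F1 zi1.
have e2 (x : G) : x + x = 0 by move: (none x) => /= /negbFE /eqP.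
have ay1 : a + y != 0 by rewrite addr_eq0 (zi6 (e2 y)) eq_sym.
have ay2 : a + y != a by apply: contra_neq y0 => e; apply: (addrI a); rewrite e addr0.
have ay3 : a + y != y by apply: contra_neq a0 => e; apply: (addIr y); rewrite e add0r.
case: (pickP [pred c | c \notin [:: 0; a; y; a + y]]) => [c /= hc|none2]; last first.
  exfalso; apply: nK; apply: (Klein_iso e2 a0 y0 ya) => x.
  by move: (none2 x) => /= /negbFE.
move: hc; rewrite !inE !negb_or => /and4P[c0 ca cy cay].
have ac1 : a + c != 0 by rewrite addr_eq0 (zi6 (e2 c)) eq_sym.
have ac2 : a + c != a by apply: contra_neq c0 => e; apply: (addrI a); rewrite e addr0.
have ac3 : a + c != c by apply: contra_neq a0 => e; apply: (addIr c); rewrite e add0r.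
have ya' : y != a + y by rewrite eq_sym.
have hc1 : a + (a + y) = y by rewrite addrA aa add0r.
have k1 : a + (a + y) != 0 by rewrite hc1.
have k2 : a + (a + y) != a by rewrite hc1.
have k3 : a + (a + y) != a + y by rewrite hc1 eq_sym.
have [//|h1] := F3 k1 k2 k3 y0 ya ya'.
have yc : y != c by rewrite eq_sym.
have [//|h2] := F3 ac1 ac2 ac3 y0 ya yc.
move: h1; rewrite -h2 => /sgm_inj /eqP; rewrite (inj_eq (addrI y)) (inj_eq oppr_inj).
by rewrite eq_sym (negbTE cay).
Qed.

Lemma sgm_sub y a : sgm (y - a) = sgm y - sgm a.
Proof.
case: (eqVneq a 0) => [->|a0]; first by rewrite sig0 !subr0.
case: (eqVneq y a) => [->|ya]; first by rewrite !subrr sig0.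
case: (eqVneq y 0) => [->|y0]; last exact: Mlem.
rewrite sig0 !sub0r.
case: (eqVneq (a + a) 0) => aa.
  rewrite (zi6 aa).
  case: (pickP [pred y' | y' \notin [set 0; a]]) => [y' /= hy|none].
    move: hy; rewrite !inE negb_or => /andP[y'0 y'a].
    have h1 := Mlem a0 y'0 y'a.
    have h2 : y' - a != 0 by rewrite subr_eq0.
    have h3 : y' - a != a by apply: contra_neq y'0 => e; rewrite -(zi5 y' aa) e subrr.
    have := Mlem a0 h2 h3; rewrite zi5 // h1 => e.
    have ss : sgm a + sgm a = 0.
      apply/eqP; rewrite -oppr_eq0; apply/eqP; apply: (addrI (sgm y')).
      by rewrite addr0 opprD addrA -e.
    by rewrite (zi6 ss).
  have : sgm a \in [set 0; a] by move: (none (sgm a)) => /= /negbFE.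
  rewrite !inE sgm_neq0 (negbTE a0) /= => /eqP ->.
  by rewrite (zi6 aa).
have aaa : a + a != a by apply: contra_neq a0 => e; apply: (addrI a); rewrite e addr0.
have aaa' : a != a + a by rewrite eq_sym.
have h1 := Mlem aa a0 aaa'.
have h2 := Mlem a0 aa aaa.
move: h1 h2; rewrite zi4 addrK => ->.
move/eqP; rewrite eq_sym subr_eq => /eqP ->.
by rewrite opprD addrA subrr add0r.
Qed.

Lemma sigD x y : sgm (x + y) = sgm x + sgm y.
Proof.
have N z : sgm (- z) = - sgm z by rewrite -sub0r sgm_sub sig0 sub0r.
by rewrite -[y]opprK sgm_sub N !opprK.
Qed.


Definition bigK (S : {set G}) :=
  [forall k in S, (k != 0) ==> ((k + k != 0) || [exists c in S, c \notin [set 0; k]])].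

Lemma sub_idem (K A : P0 G) : P0add K K = K -> aperS (val A) -> val A \subset val K ->
  sgm @: val A \subset val (phi K).
Proof.
move=> KK aA sAK.
have KKv : setadd (val K) (val K) = val K := congr1 val KK.
have e : P0add A K = K.
  by apply: val_inj => /=; apply/eqP; rewrite setadd_idem ?(valP K) ?(valP A).
have := congr1 (fun X => val (phi X)) e; rewrite phiD /= (phi_aper aA) => e'.
by apply/subsetP => w ws; rewrite -e' -[w]addr0 setadd_f // (valP (phi K)).
Qed.

Lemma aper3' (k c : G) : k + k = 0 -> k != 0 -> c != 0 -> c != k -> aperS (val (mkP [set k; c])).
Proof.
move=> kk k0 c0 ck; rewrite val_mkP setUA; apply: aper3.
- apply: contra_neq ck => e; rewrite -(zi6 kk); apply/eqP; rewrite -addr_eq0 addrC e.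
  by [].
- by apply: contra_neq c0 => e; apply: (addrI k); rewrite e addr0.
- by apply: contra_neq k0 => e; apply: (addIr c); rewrite e add0r.
Qed.

Lemma bigK_sub (K : P0 G) : P0add K K = K -> bigK (val K) -> sgm @: val K \subset val (phi K).
Proof.
move=> KK bK.
apply/subsetP => _ /imsetP[k kK ->].
case: (eqVneq k 0) => [->|k0]; first by rewrite sig0 (valP (phi K)).
case: (eqVneq (k + k) 0) => kk.
  move/forall_inP: bK => /(_ k kK); rewrite k0 kk eqxx /= => /exists_inP[c cK].
  rewrite !inE negb_or => /andP[c0 ck].
  apply: (subsetP (sub_idem KK (aper3' kk k0 c0 ck) _)).
    by apply/subsetP => z; rewrite !inE => /orP[|/orP[]] /eqP->; rewrite ?(valP K).
  by rewrite imset_f // !inE eqxx !orbT.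
apply: (subsetP (@sub_idem K (mkP [set k]) KK (aper2 kk) _)).
  by apply/subsetP => z; rewrite !inE => /orP[]/eqP->; rewrite ?(valP K).
by rewrite imset_f // !inE eqxx orbT.
Qed.

Lemma bigK_phi (K : P0 G) : P0add K K = K -> bigK (val K) -> val K != [set 0] ->
  bigK (val (phi K)).
Proof.
move=> KK bK K1.
have KKv : setadd (val K) (val K) = val K := congr1 val KK.
have [k1 k1K k10] : exists2 k1, k1 \in val K & k1 != 0.
  case: (pickP [pred x | (x \in val K) && (x != 0)]) => [x /andP[]|none]; first by exists x.
  case/eqP: K1; apply/setP => z; rewrite inE; apply/idP/eqP => [zK|->]; last exact: (valP K).
  by move: (none z) => /=; rewrite zK /= => /negbFE /eqP.
have [k2 [k2K k20 k21]] : exists k2, [/\ k2 \in val K, k2 != 0 & k2 != k1].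
  move/forall_inP: bK => /(_ k1 k1K); rewrite k10 /= => /orP[kk|/exists_inP[c cK]].
    exists (k1 + k1); split => //; first by rewrite -KKv setadd_f.
    by apply: contra_neq k10 => e; apply: (addrI k1); rewrite e addr0.
  by rewrite !inE negb_or => /andP[c0 ck]; exists c.
have sub := bigK_sub KK bK.
have s1 : sgm k1 \in val (phi K) by rewrite (subsetP sub) // imset_f.
have s2 : sgm k2 \in val (phi K) by rewrite (subsetP sub) // imset_f.
apply/forall_inP => k' k'K; apply/implyP => k'0; apply/orP; right; apply/exists_inP.
case: (eqVneq k' (sgm k1)) => [->|k'1].
  exists (sgm k2) => //; rewrite !inE negb_or sgm_neq0 k20 /=.
  by rewrite (inj_eq sgm_inj).
by exists (sgm k1) => //; rewrite !inE negb_or sgm_neq0 k10 /= eq_sym.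
Qed.

Lemma phi_small (K : P0 G) k : val K = [set 0; k] -> k != 0 -> k + k = 0 ->
  val (phi K) = sgm @: val K.
Proof.
move=> eK k0 kk.
have sD := sigD.
pose S := [set x | sgm x \in val (phi K)].
have [sinv sK Ks] := sgm_bij.
have eS : val (phi K) = sgm @: S.
  apply/setP => w; rewrite -(Ks w) mem_imset; last exact: sgm_inj.
  by rewrite inE.
have KK : P0add K K = K.
  apply: val_inj => /=; rewrite eK add22 kk; apply/setP => z; rewrite !inE.
  by case: (z == 0); case: (z == k).
have KKv : setadd (val K) (val K) = val K := congr1 val KK.
have SS : setadd S S = S.
  have := congr1 (fun X => val (phi X)) KK; rewrite phiD /= eS -imset_add //.
  by move/(imset_inj sgm_inj).
have S0 : 0 \in S by rewrite inE sig0 (valP (phi K)).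
have key (Y : P0 G) : aperS (val Y) -> (val Y \subset val K) = (val Y \subset S).
  move=> aY; rewrite -setadd_idem ?(valP K) ?(valP Y) // -setadd_idem ?(valP Y) //.
  apply/eqP/eqP => e.
    have : P0add Y K = K by apply: val_inj.
    move/(congr1 (fun X => val (phi X))); rewrite phiD /= (phi_aper aY) eS -imset_add //.
    by move/(imset_inj sgm_inj).
  have : phi (P0add Y K) = phi K.
    apply: val_inj; rewrite phiD /= (phi_aper aY) eS -imset_add //.
    by rewrite e.
  by move/phi_inj/(congr1 val).
have [s sS s0] : exists2 s, s \in S & s != 0.
  case: (pickP [pred x | (x \in S) && (x != 0)]) => [x /andP[]|none]; first by exists x.
  have : phi K = phi (P0one G).
    apply: val_inj; rewrite phi1 eS /=; apply/setP => z.
    rewrite inE; apply/imsetP/eqP => [[x xS ->]|->]; last by exists 0; rewrite ?sig0.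
    by move: (none x) => /=; rewrite xS /= => /negbFE /eqP ->; rewrite sig0.
  move/phi_inj/(congr1 val); rewrite eK /= => /setP /(_ k).
  by rewrite !inE eqxx orbT (negbTE k0).
have ss : s + s = 0.
  apply/eqP; apply: contraT => ss.
  have : val (mkP [set s]) \subset val K.
    rewrite (key (mkP [set s]) (aper2 ss)); apply/subsetP => z /=.
    by rewrite in_setU1 in_set1 => /orP[] /eqP ->.
  move/subsetP => /(_ s); rewrite eK !inE eqxx orbT (negbTE s0) => /(_ isT) /eqP sk.
  by move: ss; rewrite sk kk eqxx.
have eS2 : S = [set 0; s].
  apply/setP => c; rewrite in_setU1 in_set1; apply/idP/idP; last first.
    by case/orP => /eqP ->.
  move=> cS; apply: contraT; rewrite negb_or => /andP[c0 cs].
  have : val (mkP [set s; c]) \subset val K.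
    rewrite (key _ (aper3' ss s0 c0 cs)); apply/subsetP => z /=.
    by rewrite in_setU1 in_setU1 in_set1 => /orP[|/orP[]] /eqP ->.
  move/subsetP => sub.
  have := sub s; rewrite eK !inE eqxx orbT (negbTE s0) => /(_ isT) /eqP sk.
  have := sub c; rewrite eK !inE eqxx !orbT (negbTE c0) => /(_ isT) /eqP ck.
  by move: cs; rewrite sk ck eqxx.
suff sk : s = k by rewrite eS eS2 eK sk.
apply/eqP; apply: contraT => sk.
have rel (A B : P0 G) : aperS (val A) -> aperS (val B) ->
    setadd (val A) (val K) = setadd (val B) (val K) ->
    setadd (val A) S = setadd (val B) S.
  move=> aA aB e.
  have : P0add A K = P0add B K by apply: val_inj.
  move/(congr1 (fun X => val (phi X))); rewrite !phiD /= (phi_aper aA) (phi_aper aB) eS.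
  by rewrite -!imset_add // => /(imset_inj sgm_inj).
have ks : k + s != 0.
  by rewrite addr_eq0 (zi6 ss) eq_sym.
case: (pickP [pred a : G | a + a != 0]) => [a /= aa|none].
  have a0 : a != 0 by apply: contra_neq aa => ->; rewrite addr0.
  have aka : (a + k) + (a + k) != 0 by rewrite addrACA kk addr0.
  have eqK : setadd (val (mkP [set a])) (val K) = setadd (val (mkP [set a + k])) (val K).
    rewrite /= eK !add22 -addrA kk addr0; apply/setP => z; rewrite !inE.
    by case: (z == 0); case: (z == a); case: (z == k); case: (z == a + k).
  have e := rel (mkP [set a]) (mkP [set a + k]) (aper2 aa) (aper2 aka) eqK.
  have : a \in setadd (val (mkP [set a])) S.
    by apply/setaddP; exists a, 0; rewrite addr0; split => //; rewrite !inE eqxx orbT.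
  have f1 : a != a + k by rewrite -{1}[a]addr0 (inj_eq (addrI a)) eq_sym.
  have f2 : a != a + k + s by rewrite -{1}[a]addr0 -addrA (inj_eq (addrI a)) eq_sym.
  have f3 : a != s by apply: contra_neq aa => ->.
  rewrite e eS2 /= add22 !inE (negbTE a0) (negbTE f1) (negbTE f2) (negbTE f3).
  by [].
have e2 (x : G) : x + x = 0 by move: (none x) => /= /negbFE /eqP.
case: (pickP [pred a | a \notin [:: 0; k; s; k + s]]) => [a /= ha|none2]; last first.
  exfalso; apply: nK; apply: (Klein_iso e2 k0 s0 sk) => x.
  by move: (none2 x) => /= /negbFE.
move: ha; rewrite !inE !negb_or => /and4P[a0 ak as_ aks].
have ak' : a + k != 0 by rewrite addr_eq0 (zi6 (e2 k)).
have ka : k != a by rewrite eq_sym.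
have ka' : k != a + k by rewrite -{1}[k]add0r (inj_eq (addIr k)) eq_sym.
have aA := aper3' (e2 a) a0 k0 ka.
have aB := aper3' (e2 (a + k)) ak' k0 ka'.
have eqK : setadd (val (mkP [set a; k])) (val K) = setadd (val (mkP [set a + k; k])) (val K).
  rewrite /= !setUA eK !add32 -addrA kk addr0; apply/setP => z; rewrite !inE.
  by case: (z == 0); case: (z == a); case: (z == k); case: (z == a + k).
have e := rel _ _ aA aB eqK.
have : a \in setadd (val (mkP [set a; k])) S.
  by apply/setaddP; exists a, 0; rewrite addr0; split => //; rewrite !inE eqxx !orbT.
have f1 : a != a + k by rewrite -{1}[a]addr0 (inj_eq (addrI a)) eq_sym.
have f2 : a != a + k + s by rewrite -{1}[a]addr0 -addrA (inj_eq (addrI a)) eq_sym.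
rewrite e eS2 /= setUA add32 !inE (negbTE a0) (negbTE f1) (negbTE f2) (negbTE ak).
by rewrite (negbTE as_) (negbTE aks).
Qed.
End Aut.


Lemma Cs_inj (G : finZmodType) (a b : G) : a != 0 -> b != 0 -> Cs a = Cs b -> a = b.
Proof.
move=> a0 b0 /(congr1 val); rewrite !val_Cs // => /setP /(_ a).
by rewrite !inE eqxx => /esym /negbFE /eqP.
Qed.

Lemma sgm_inv (G : finZmodType) (phi g : P0 G -> P0 G) (phiK : cancel phi g) (gK : cancel g phi)
  (phiD : forall X Y, phi (P0add X Y) = P0add (phi X) (phi Y))
  (phi1 : phi (P0one G) = P0one G) y :
  sgm g (sgm phi y) = y.
Proof.
have gD' := gD phiK gK phiD.
have g1' := g1 phiK phi1.
case: (eqVneq y 0) => [->|y0].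
  by rewrite (sig0 gK phiD) (sig0 phiK gD').
have sy0 : sgm phi y != 0 by rewrite (sgm_neq0 phiK gK phiD phi1).
have e := phiCs phiK gK phiD phi1 y0.
have e' := phiCs gK phiK gD' g1' sy0.
have hne : sgm g (sgm phi y) != 0 by rewrite (sgm_neq0 gK phiK gD' g1').
by apply: (Cs_inj hne y0); rewrite -e' -e phiK.
Qed.

Lemma phi_idem (G : finZmodType) (nK : ~ group_isomorphic G Klein4)
  (phi g : P0 G -> P0 G) (phiK : cancel phi g) (gK : cancel g phi)
  (phiD : forall X Y, phi (P0add X Y) = P0add (phi X) (phi Y))
  (phi1 : phi (P0one G) = P0one G) (K : P0 G) :
  P0add K K = K -> val (phi K) = sgm phi @: val K.
Proof.
move=> KK.
have gD' := gD phiK gK phiD.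
have g1' := g1 phiK phi1.
case: (boolP (bigK (val K))) => bK.
  case: (eqVneq (val K) [set 0]) => K1.
    have -> : K = P0one G by apply: val_inj.
    by rewrite phi1 /= imset_set1 (sig0 gK phiD).
  apply/eqP; rewrite eqEsubset (bigK_sub phiK gK phiD phi1 KK bK) andbT.
  have KK' : P0add (phi K) (phi K) = phi K by rewrite -phiD KK.
  have bK' := bigK_phi phiK gK phiD phi1 KK bK K1.
  have sub := bigK_sub gK phiK gD' g1' KK' bK'.
  rewrite phiK in sub.
  apply/subsetP => w wK.
  rewrite -(sgm_inv gK phiK gD' g1' w) imset_f //.
  by rewrite (subsetP sub) // imset_f.
move: bK; rewrite /bigK negb_forall_in => /exists_inP[k kK].
rewrite negb_imply negb_or negbK => /and3P[k0 /eqP kk hc].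
apply: (phi_small phiK gK phiD phi1 nK _ k0 kk).
apply/setP => c; apply/idP/idP => [cK|].
  apply: contraT => hc'; case/negP: hc; apply/exists_inP; by exists c.
by rewrite !inE => /orP[]/eqP ->; rewrite ?(valP K).
Qed.

Lemma main_exist (G : finZmodType) (nK : ~ group_isomorphic G Klein4)
  (phi : P0 G -> P0 G) : P0_monoid_aut phi ->
  exists h : G -> G, group_aut h /\ forall X : P0 G, val (phi X) = h @: val X.
Proof.
case=> [[g phiK gK] phiD phi1].
exists (sgm phi); split.
  split; first exact: (sgm_bij phiK gK phiD phi1).
  exact: (sigD phiK gK phiD phi1 nK).
move=> X.
have [K0 KK AK aA] := stab_decomp (valP X).
pose Kp := mkP (stab (val X)).
pose Ap := mkP (val X :\: stab (val X)).
have eK : val Kp = stab (val X) by rewrite val_mkP0.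
have eX : X = P0add Ap Kp.
  by apply: val_inj; rewrite /= [0 |: stab _](setU1_in K0) AK.
have KKp : P0add Kp Kp = Kp.
  by apply: val_inj; rewrite /= [0 |: stab _](setU1_in K0) KK.
have e1 : val (phi Ap) = sgm phi @: (0 |: (val X :\: stab (val X))).
  exact: (phi_aper phiK gK phiD phi1 (X:=Ap) aA).
have e2 : val (phi Kp) = sgm phi @: stab (val X).
  by rewrite (phi_idem nK phiK gK phiD phi1 KKp) eK.
have -> : val (phi X) = setadd (val (phi Ap)) (val (phi Kp)) by rewrite {1}eX phiD.
rewrite e1 e2 -imset_add ?AK //; exact: (sigD phiK gK phiD phi1 nK).
Qed.

Lemma gaut0 (G : finZmodType) (h : G -> G) : group_aut h -> h 0 = 0.
Proof.
case=> _ hD; have := hD 0 0; rewrite addr0 => e.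
by apply: (addrI (h 0)); rewrite addr0 -e.
Qed.

Lemma aut_unique (G : finZmodType) (h h' : G -> G) : group_aut h -> group_aut h' ->
  (forall X : P0 G, h @: val X = h' @: val X) -> h = h'.
Proof.
move=> ha ha' e; apply: functional_extensionality => x.
have h0 := gaut0 ha; have h0' := gaut0 ha'.
have hinj : injective h by case: ha => /bij_inj.
have := e (mkP [set x]); rewrite /= !imsetU1 !imset_set1 h0 h0' => /setP /(_ (h x)).
rewrite !inE eqxx orbT => /esym /orP[/eqP hx0|/eqP //].
have x0 : x = 0 by apply: hinj; rewrite hx0 h0.
by rewrite x0 h0 h0'.
Qed.

Theorem theorem3p7 (G : finZmodType) :
  ~ group_isomorphic G Klein4 ->
  (forall h : G -> G, group_aut h ->
     exists phi : P0 G -> P0 G,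
       P0_monoid_aut phi /\ forall X : P0 G, val (phi X) = h @: val X) /\
  (forall phi : P0 G -> P0 G, P0_monoid_aut phi ->
     exists! h : G -> G,
       group_aut h /\ forall X : P0 G, val (phi X) = h @: val X).
Proof.
move=> nK; split.
  move=> h ha; have h0 := gaut0 ha; case: ha => hb hD.
  have [hi hK Kh] := hb.
  have hi0 : hi 0 = 0 by rewrite -{1}h0 hK.
  have mem (X : P0 G) : 0 \in h @: val X.
    by apply/imsetP; exists 0; [exact: (valP X) | rewrite h0].
  have memi (X : P0 G) : 0 \in hi @: val X.
    by apply/imsetP; exists 0; [exact: (valP X) | rewrite hi0].
  exists (fun X : P0 G => (exist _ (h @: val X) (mem X) : P0 G)); split => //.
  split.
  - exists (fun X : P0 G => (exist _ (hi @: val X) (memi X) : P0 G)) => X; apply: val_inj => /=.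
      by rewrite -imset_comp (eq_imset _ hK) imset_id.
    by rewrite -imset_comp (eq_imset _ Kh) imset_id.
  - by move=> X Y; apply: val_inj => /=; exact: imset_add hD _ _.
  - by apply: val_inj => /=; rewrite imset_set1 h0.
move=> phi hphi.
have [h [ha e]] := main_exist nK hphi.
exists h; split => // h' [ha' e'].
by apply: aut_unique ha ha' _ => X; rewrite -e -e'.
Qed.
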